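(* Let $k\ge2$ and $n\ge k$ be integers, let $\beta=\sum_{i=1}^n i^{k-1}$ and $c_i=i^{k-1}/\beta$ for $i=1,\dots,n$. In the position-randomized auction setting described in the context, suppose all $k-1$ disadvantaged bidders use the initial bid sequence $c_1,\dots,c_n$ and the uniform distribution on permutations. Then for every position-randomized strategy of the adversary ${\mathcal A}$, each disadvantaged bidder wins at least $\frac{1}{k-1}\left(n-\frac{\beta-1}{n^{k-1}}\right)$ objects in expectation. Moreover this is optimal: for every initial bid sequence and every permutation distribution used in common by the disadvantaged bidders, ${\mathcal A}$ has a position-randomized strategy under which each disadvantaged bidder wins at most $\frac{1}{k-1}\left(n-\frac{\beta-1}{n^{k-1}}\right)$ objects in expectation.
   Context: Auction model: there are $k$ bidders, one adversary ${\mathcal A}$ and $k-1$ disadvantaged bidders, and $n$ objects auctioned simultaneously. Each object is won by the highest bidder on it, paying his bid; if $m$ bidders tie for the highest bid, each wins with probability $1/m$. All bidders are restricted to position-randomized bidding algorithms: a bidder chooses an initial sequence $x_1,\dots,x_n$ of positive reals with $\sum x_j\le 1$ (the budget) and a probability distribution on permutations $\sigma$ of $\{1,\dots,n\}$; he draws $\sigma$ from that distribution and bids $x_j$ on object $\sigma(j)$. All disadvantaged bidders use the same initial sequence and the same permutation distribution, each drawing his permutation independently; ${\mathcal A}$ knows their algorithm, and his permutation is drawn independently of theirs. Expected numbers of won objects are over all this randomness. *)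

(* Defs.v *)
From mathcomp Require Import all_boot all_order all_algebra all_fingroup.
From mathcomp Require Import reals.
Set Implicit Arguments. Unset Strict Implicit. Unset Printing Implicit Defensive.
Import Order.TTheory GRing.Theory Num.Theory.
Local Open Scope ring_scope.

(* Objects are 'I_n.  A permutation s : {perm 'I_n} means: the bidder bids
   x_j on object s(j); hence object o receives the bid x_(s^-1 o). *)
Definition bid_on (R : Type) (n : nat) (x : 'I_n -> R) (s : {perm 'I_n})
  (o : 'I_n) : R := x ((s^-1)%g o).

(* Bidders: None = the adversary A, Some d (d : 'I_m) = disadvantaged bidder d. *)
Definition all_bids (R : Type) (n m : nat) (a x : 'I_n -> R)
  (sA : {perm 'I_n}) (sD : {ffun 'I_m -> {perm 'I_n}}) (o : 'I_n)
  (i : option 'I_m) : R :=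
  match i with None => bid_on a sA o | Some d => bid_on x (sD d) o end.

Definition win_share (R : realFieldType) (m : nat) (b : option 'I_m -> R)
  (i : option 'I_m) : R :=
  if [forall j, b j <= b i] then (#|[set j | b j == b i]|%:R)^-1 else 0.

Definition bid_seq (R : realFieldType) (n : nat) (x : 'I_n -> R) : Prop :=
  (forall j, 0 < x j) /\ \sum_j x j <= 1.

Definition perm_dist (R : realFieldType) (n : nat) (p : {perm 'I_n} -> R) : Prop :=
  (forall s, 0 <= p s) /\ \sum_s p s = 1.

Definition unif_perm (R : realFieldType) (n : nat) : {perm 'I_n} -> R :=
  fun _ => ((n`!)%:R)^-1.

Definition exp_wins (R : realFieldType) (n m : nat) (a : 'I_n -> R)
  (q : {perm 'I_n} -> R) (x : 'I_n -> R) (p : {perm 'I_n} -> R) (d : 'I_m) : R :=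
  \sum_(sA : {perm 'I_n}) \sum_(sD : {ffun 'I_m -> {perm 'I_n}})
    q sA * (\prod_(e : 'I_m) p (sD e)) *
    \sum_(o : 'I_n) win_share (all_bids a x sA sD o) (Some d).

(* Main.v *)
Require Import Defs.
From mathcomp Require Import all_boot all_order all_algebra all_fingroup.
From mathcomp Require Import reals.
From mathcomp Require Import ring lra.
From Stdlib Require Import FunctionalExtensionality.
Set Implicit Arguments. Unset Strict Implicit. Unset Printing Implicit Defensive.
Import Order.TTheory GRing.Theory Num.Theory.
Local Open Scope ring_scope.
Lemma sum_option (V : nmodType) (m : nat) (F : option 'I_m -> V) :
  \sum_i F i = F None + \sum_e F (Some e).
Proof.
rewrite (bigD1 None) //=; congr (_ + _).
rewrite (reindex_omap Some id) //=; last by case.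
by apply: eq_bigl => e; rewrite eqxx.
Qed.

Section Share.
Variable R : realFieldType.
Variable m : nat.
Implicit Types b : option 'I_m -> R.

Lemma win_share_ge0 b i : 0 <= win_share b i.
Proof. rewrite /win_share; case: ifP => // _; by rewrite invr_ge0. Qed.

Lemma sum_win_share b : \sum_i win_share b i = 1.
Proof.
pose i0 := [arg max_(i > None) b i]%O.
have hi0 : forall j, b j <= b i0.
  rewrite /i0; case: arg_maxP => //= i _ H j; exact: H.
have E : forall i, win_share b i =
   if b i == b i0 then (#|[set j | b j == b i0]|%:R)^-1 else 0.
  move=> i; rewrite /win_share.
  have [->|ne] := eqVneq (b i) (b i0).
    by have -> : [forall j, b j <= b i0] by apply/forallP.
  case: ifP => // /forallP H.
  by move: ne; rewrite eq_le hi0 H.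
under eq_bigr do rewrite E.
rewrite -big_mkcond /= sumr_const.
have -> : #|[pred i | b i == b i0]| = #|[set j | b j == b i0]|.
  by apply: eq_card => j; rewrite inE.
rewrite -[_ *+ _]mulr_natr mulVf // pnatr_eq0 -lt0n.
by apply/card_gt0P; exists i0; rewrite inE.
Qed.

Lemma win_share_inv b (g : option 'I_m -> option 'I_m) i :
  involutive g -> win_share (fun j => b (g j)) i = win_share b (g i).
Proof.
move=> gK; rewrite /win_share.
have -> : [forall j, b (g j) <= b (g i)] = [forall j, b j <= b (g i)].
  apply/forallP/forallP => H j; last exact: H.
  by rewrite -(gK j); apply: H.
have -> : [set j | b (g j) == b (g i)] = g @^-1: [set j | b j == b (g i)].
  by apply/setP => j; rewrite !inE.
by rewrite card_preimset //; apply: inv_inj.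
Qed.

Definition ind (P : bool) : R := (P : nat)%:R.

Lemma share_None_le b :
  win_share b None <=
  ((\prod_e ind (b (Some e) <= b None)) + (\prod_e ind (b (Some e) < b None))) / 2.
Proof.
have ind_ge0 : forall P, 0 <= ind P by move=> P; rewrite /ind ler0n.
have pge0 : forall P : 'I_m -> bool, 0 <= \prod_e ind (P e).
  by move=> P; apply: prodr_ge0 => e _.
rewrite /win_share; case: ifP => [/forallP H|_]; last first.
  by rewrite divr_ge0 // addr_ge0.
rewrite big1 /=; last by move=> e _; rewrite /ind (H (Some e)).
have [/forallP H2|] := boolP [forall e, b (Some e) < b None].
  rewrite big1 /=; last by move=> e _; rewrite /ind (H2 e).
  have -> : [set j | b j == b None] = [set None].
    apply/setP => j; rewrite !inE; case: j => [e|] /=; last by rewrite !eqxx.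
    by rewrite (lt_eqF (H2 e)).
  by rewrite cards1 invr1 -[1 + 1]/(2%:R) divff // pnatr_eq0.
case/forallPn => e; rewrite lt_neqAle (H (Some e)) andbT negbK => /eqP he.
have c2 : (2 <= #|[set j | b j == b None]|)%N.
  rewrite (cardD1 None) (cardD1 (Some e)) !inE he !eqxx /=.
  by [].
apply: (@le_trans _ _ (1 / 2)).
  rewrite div1r lef_pV2 ?posrE ?ltr0n //; last by apply: leq_trans c2.
  by rewrite ler_nat.
by rewrite ler_pM2r ?invr_gt0 ?ltr0n // lerDl pge0.
Qed.

Lemma share_None_ge b :
  \prod_e ind (b (Some e) < b None) <= win_share b None.
Proof.
have [/forallP H2|] := boolP [forall e, b (Some e) < b None].
  rewrite big1 /=; last by move=> e _; rewrite /ind (H2 e).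
  rewrite /win_share.
  have -> : [forall j, b j <= b None].
    by apply/forallP; case => [e|] //=; rewrite ltW.
  have -> : [set j | b j == b None] = [set None].
    apply/setP => j; rewrite !inE; case: j => [e|] /=; last by rewrite !eqxx.
    by rewrite (lt_eqF (H2 e)).
  by rewrite cards1 invr1.
case/forallPn => e he.
rewrite (bigD1 e) //= /ind (negbTE he) mul0r; exact: win_share_ge0.
Qed.
End Share.

Section Decomp.
Variable R : realFieldType.
Variables n m : nat.

Definition W (p : {perm 'I_n} -> R) (sD : {ffun 'I_m -> {perm 'I_n}}) : R :=
  \prod_e p (sD e).

Lemma prod_expect (f : 'I_m -> {perm 'I_n} -> R) :
  \sum_(sD : {ffun 'I_m -> {perm 'I_n}}) \prod_e f e (sD e) =
  \prod_e \sum_s f e s.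
Proof. by rewrite bigA_distr_bigA. Qed.

Lemma sumW p : perm_dist p -> \sum_sD W p sD = 1.
Proof.
case=> _ p1; rewrite /W (prod_expect (fun _ => p)).
by rewrite big1 // => e _; rewrite p1.
Qed.

Definition Esh (a x : 'I_n -> R) (p : {perm 'I_n} -> R) sA o (i : option 'I_m) :=
  \sum_sD W p sD * win_share (all_bids a x sA sD o) i.

Lemma Esh_sym a x p sA o d d' : Esh a x p sA o (Some d) = Esh a x p sA o (Some d').
Proof.
pose t := tperm d d'.
pose g := fun i : option 'I_m => omap t i.
have gK : involutive g by case => //= e; rewrite tpermK.
pose phi := fun sD : {ffun 'I_m -> {perm 'I_n}} => [ffun e => sD (t e)].
have phiK : involutive phi.
  by move=> sD; apply/ffunP => e; rewrite !ffunE tpermK.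
rewrite /Esh (reindex_inj (inv_inj phiK)) /=.
apply: eq_bigr => sD _; congr (_ * _).
  rewrite /W [in RHS](reindex_inj (inv_inj (@tpermK _ d d'))) /=.
  by apply: eq_bigr => e _; rewrite ffunE.
have -> : all_bids a x sA (phi sD) o = fun j => all_bids a x sA sD o (g j).
  by apply: functional_extensionality => -[e|] //=; rewrite ffunE.
by rewrite win_share_inv //= tpermL.
Qed.

Lemma sum_Esh a x p sA o : perm_dist p -> \sum_i Esh a x p sA o i = 1.
Proof.
move=> pd; rewrite /Esh exchange_big /= -(sumW pd).
apply: eq_bigr => sD _; by rewrite -mulr_sumr sum_win_share mulr1.
Qed.

Lemma decomp a x p q (d : 'I_m) : (0 < m)%N -> perm_dist p -> perm_dist q ->
  exp_wins a q x p d =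
  (m%:R)^-1 * (n%:R - \sum_sA q sA * \sum_o Esh a x p sA o None).
Proof.
move=> m0 pd qd.
have Ed : forall sA o, Esh a x p sA o (Some d) = (m%:R)^-1 * (1 - Esh a x p sA o None).
  move=> sA o; have S := sum_Esh a x sA o pd; rewrite sum_option in S.
  move: S; under eq_bigr do rewrite (Esh_sym _ _ _ _ _ _ d).
  rewrite sumr_const card_ord.
  set A := Esh _ _ _ _ _ None; set B := Esh _ _ _ _ _ (Some d) => S.
  have -> : 1 - A = B *+ m by rewrite -S addrC addrK.
  rewrite -[B *+ m]mulr_natl mulrA mulVf ?mul1r //.
  by rewrite pnatr_eq0 -lt0n.
rewrite /exp_wins.
transitivity (\sum_sA q sA * \sum_o Esh a x p sA o (Some d)).
  apply: eq_bigr => sA _.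
  rewrite /Esh; under eq_bigr do rewrite mulr_sumr.
  rewrite exchange_big /= mulr_sumr; apply: eq_bigr => o _.
  rewrite mulr_sumr; apply: eq_bigr => sD _; by rewrite mulrA.
have E2 : forall sA, \sum_o Esh a x p sA o (Some d) =
   (m%:R)^-1 * (n%:R - \sum_o Esh a x p sA o None).
  move=> sA; under eq_bigr do rewrite Ed.
  by rewrite -mulr_sumr sumrB sumr_const card_ord.
under eq_bigr do rewrite E2 mulrCA.
rewrite -mulr_sumr; congr (_ * _).
under eq_bigr do rewrite mulrBr.
rewrite sumrB -mulr_suml; case: qd => _ ->; by rewrite mul1r.
Qed.
End Decomp.

Section Unif.
Variable R : realFieldType.
Variable n : nat.

Lemma sum_perm_inv (F : 'I_n -> R) (o : 'I_n) :
  n%:R * \sum_(s : {perm 'I_n}) F ((s^-1)%g o) = (n`!)%:R * \sum_j F j.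
Proof.
have indep : forall o', \sum_(s : {perm 'I_n}) F ((s^-1)%g o) =
                          \sum_(s : {perm 'I_n}) F ((s^-1)%g o').
  move=> o'; rewrite [RHS](reindex_inj (mulIg (tperm o o'))) /=.
  apply: eq_bigr => s _; by rewrite invMg permM tpermV tpermR.
have -> : n%:R * \sum_(s : {perm 'I_n}) F ((s^-1)%g o) =
  \sum_(o' < n) \sum_(s : {perm 'I_n}) F ((s^-1)%g o').
  by under [RHS]eq_bigr => o' _ do rewrite -(indep o'); rewrite sumr_const card_ord mulr_natl.
rewrite exchange_big /= mulr_natl -card_Sn -sumr_const; apply: eq_bigr => s _.
by rewrite [RHS](reindex_inj (@perm_inj _ (s^-1)%g)).
Qed.

Lemma unif_expect (F : 'I_n -> R) (o : 'I_n) : (0 < n)%N ->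
  \sum_s @unif_perm R n s * F ((s^-1)%g o) = (n%:R)^-1 * \sum_j F j.
Proof.
move=> n0; rewrite /unif_perm -mulr_sumr.
apply: (@mulfI _ (n%:R)); first by rewrite pnatr_eq0 -lt0n.
have nz : n%:R != 0 :> R by rewrite pnatr_eq0 -lt0n.
have fz : (n`!)%:R != 0 :> R by rewrite pnatr_eq0 -lt0n fact_gt0.
rewrite mulrCA sum_perm_inv mulrA mulVf // mul1r mulrA mulfV // mul1r.
by [].
Qed.

Lemma unif_dist : perm_dist (@unif_perm R n).
Proof.
split; first by move=> s; rewrite /unif_perm invr_ge0 ler0n.
rewrite /unif_perm sumr_const card_Sn -[_ *+ _]mulr_natr mulVf //.
by rewrite pnatr_eq0 -lt0n fact_gt0.
Qed.
End Unif.

Section Bounds.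
Variable R : realFieldType.
Variables n m : nat.

Lemma W_prod (p f : {perm 'I_n} -> R) :
  \sum_(sD : {ffun 'I_m -> {perm 'I_n}}) W p sD * \prod_e f (sD e) =
  (\sum_s p s * f s) ^+ m.
Proof.
rewrite /W; under eq_bigr do rewrite -big_split /=.
by rewrite (prod_expect (fun _ s => p s * f s)) prodr_const card_ord.
Qed.

Lemma W_ge0 (p : {perm 'I_n} -> R) (sD : {ffun 'I_m -> {perm 'I_n}}) : perm_dist p -> 0 <= W p sD.
Proof. by case=> p0 _; apply: prodr_ge0 => e _. Qed.

Lemma Esh_None_le (a x : 'I_n -> R) (p : {perm 'I_n} -> R) (sA : {perm 'I_n}) (o : 'I_n) : perm_dist p ->
  Esh a x p sA o (None : option 'I_m) <=
  ((\sum_s p s * ind R (x ((s^-1)%g o) <= a ((sA^-1)%g o))) ^+ m +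
   (\sum_s p s * ind R (x ((s^-1)%g o) < a ((sA^-1)%g o))) ^+ m) / 2.
Proof.
move=> pd; rewrite -!(@W_prod p) -big_split mulr_suml /=.
apply: ler_sum => sD _; rewrite -mulrDr -mulrA; apply: ler_wpM2l.
  exact: W_ge0.
exact: (@share_None_le R m (all_bids a x sA sD o)).
Qed.

Lemma Esh_None_ge (a x : 'I_n -> R) (p : {perm 'I_n} -> R) (sA : {perm 'I_n}) (o : 'I_n) : perm_dist p ->
  (\sum_s p s * ind R (x ((s^-1)%g o) < a ((sA^-1)%g o))) ^+ m
  <= Esh a x p sA o (None : option 'I_m).
Proof.
move=> pd; rewrite -(@W_prod p).
apply: ler_sum => sD _; apply: ler_wpM2l; first exact: W_ge0.
exact: (@share_None_ge R m (all_bids a x sA sD o)).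
Qed.
End Bounds.

Local Close Scope ring_scope.
Lemma down_closed (P : nat -> bool) (hP : forall i, P i.+1 -> P i) j k :
  P (j + k) -> P j.
Proof. elim: k => [|k IH]; rewrite ?addn0 // addnS => /hP; exact: IH. Qed.

Lemma sum_bool_le (P : nat -> bool) n : (\sum_(j < n) P j <= n)%N.
Proof.
by rewrite -[X in (_ <= X)%N](card_ord n) -sum1_card; apply: leq_sum => j _; case: (P j).
Qed.

Lemma prefix (P : nat -> bool) (hP : forall i, P i.+1 -> P i) n i :
  (i < n)%N -> P i = (i < \sum_(j < n) P j)%N.
Proof.
elim: n i => [|n IH] i hi //.
rewrite big_ord_recr /=.
have hs : (\sum_(j < n) P j <= n)%N.
  by rewrite -[X in (_ <= X)%N](card_ord n) -sum1_card; apply: leq_sum => j _; case: (P j).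
case Pn: (P n).
  have allP : forall j, (j <= n)%N -> P j.
    by move=> j hj; apply: (@down_closed P hP j (n - j)); rewrite subnKC.
  have -> : \sum_(j < n) P j = n.
    rewrite -[RHS](card_ord n) -sum1_card; apply: eq_bigr => j _.
    by rewrite allP // ltnW.
  have hi' : (i <= n)%N by [].
  by rewrite allP // addn1 hi.
rewrite addn0; move: hi; rewrite ltnS leq_eqVlt => /orP [/eqP ->|hi].
  by rewrite Pn ltnNge hs.
exact: IH.
Qed.

Section Comb.
Variable R : realFieldType.
Local Open Scope ring_scope.
Variables n m : nat.
Hypothesis m0 : (0 < m)%N.

Definition Lc (Y : R) : nat := (\sum_(j < n) ((((j.+1 ^ m)%N)%:R <= Y)%R : nat))%N.
Definition Sc (Y : R) : nat := (\sum_(j < n) ((((j.+1 ^ m)%N)%:R < Y)%R : nat))%N.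


Let hPL (Y : R) : forall i, (((i.+2 ^ m)%N)%:R <= Y) -> (((i.+1 ^ m)%N)%:R <= Y).
Proof. move=> i h; apply: le_trans h; by rewrite ler_nat leq_exp2r. Qed.
Let hPS (Y : R) : forall i, (((i.+2 ^ m)%N)%:R < Y) -> (((i.+1 ^ m)%N)%:R < Y).
Proof. move=> i h; apply: le_lt_trans h; by rewrite ler_nat leq_exp2r. Qed.

Lemma F1 Y : 0 <= Y -> ((Lc Y ^ m)%N%:R <= Y).
Proof.
move=> Y0; case E: (Lc Y) => [|l]; first by rewrite exp0n.
have hl : (l < n)%N by rewrite -E; exact: (sum_bool_le (fun i => ((i.+1 ^ m)%N)%:R <= Y) n).
by rewrite (@prefix (fun i => ((i.+1 ^ m)%N)%:R <= Y) (@hPL Y) n l hl) -/(Lc Y) E.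
Qed.

Lemma F2 Y : 0 < Y -> ((Sc Y ^ m)%N%:R < Y).
Proof.
move=> Y0; case E: (Sc Y) => [|l]; first by rewrite exp0n.
have hl : (l < n)%N by rewrite -E; exact: (sum_bool_le (fun i => ((i.+1 ^ m)%N)%:R < Y) n).
by rewrite (@prefix (fun i => ((i.+1 ^ m)%N)%:R < Y) (@hPS Y) n l hl) -/(Sc Y) E.
Qed.

Lemma F4 Y : (Sc Y <= Lc Y)%N.
Proof. apply: leq_sum => j _; case: ltP => //= h; by rewrite ltW. Qed.

Lemma F3 Y : (Sc Y < Lc Y)%N -> Y = ((Sc Y).+1 ^ m)%N%:R.
Proof.
move=> h.
have hn : (Sc Y < n)%N by apply: leq_trans h (sum_bool_le (fun i => ((i.+1 ^ m)%N)%:R <= Y) n).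
have h1 := @prefix (fun i => ((i.+1 ^ m)%N)%:R < Y) (@hPS Y) n _ hn.
have h2 := @prefix (fun i => ((i.+1 ^ m)%N)%:R <= Y) (@hPL Y) n _ hn.
rewrite -/(Sc Y) ltnn in h1; rewrite -/(Lc Y) h in h2.
apply/eqP; rewrite eq_le h2 andbT leNgt; apply/negP => h3.
by move: h1; rewrite h3.
Qed.

Definition V (Y : R) : R := (((Lc Y ^ m)%N)%:R + ((Sc Y ^ m)%N)%:R) / 2.
Definition w (Y : R) : nat :=
  if (Sc Y < Lc Y)%N then ((Sc Y).+1 ^ m)%N else (Sc Y ^ m)%N.
Definition t (Y : R) : bool := (Sc Y < Lc Y)%N.

Lemma G Y : 0 < Y ->
  [/\ V Y <= (w Y)%:R - ((t Y : nat)%:R) / 2, (w Y)%:R <= Y &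
      (~~ t Y -> (w Y)%:R < Y)].
Proof.
move=> Y0; rewrite /V /w /t; case: ifP => h /=.
  have e := F3 h; have l := F1 (ltW Y0).
  have s : ((Sc Y ^ m)%N%:R + 1 <= ((Sc Y).+1 ^ m)%N%:R :> R).
    by rewrite natr1 ler_nat ltn_exp2r.
  rewrite -e; split => //.
  move: l s; rewrite -e.
  set a := ((Lc Y ^ m)%N)%:R; set b := ((Sc Y ^ m)%N)%:R => l s.
  lra.
have e : Lc Y = Sc Y.
  by apply/eqP; rewrite eq_sym eqn_leq F4 leqNgt h.
rewrite e; have f := F2 Y0; split => //; last by rewrite ltW.
set b := ((Sc Y ^ m)%N)%:R; lra.
Qed.

Lemma K1 (Y : 'I_n -> R) (B : nat) : (2 <= n)%N -> (forall j, 0 < Y j) ->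
  \sum_j Y j <= B%:R -> \sum_j V (Y j) <= B%:R - 1.
Proof.
move=> n2 Ypos YB.
have hV : forall j, V (Y j) <= (w (Y j))%:R.
  move=> j; case: (G (Ypos j)) => h _ _; apply: (le_trans h).
  by rewrite lerBlDr lerDl divr_ge0.
have [/forallP allt|/forallPn [j0 hj0]] := boolP [forall j, t (Y j)].
  apply: (@le_trans _ _ (\sum_j ((w (Y j))%:R - 1/2))).
    apply: ler_sum => j _; case: (G (Ypos j)) => h _ _; by rewrite allt in h.
  rewrite sumrB sumr_const card_ord.
  have hw : \sum_j (w (Y j))%:R <= B%:R :> R.
    apply: le_trans YB; apply: ler_sum => j _; by case: (G (Ypos j)).
  have hn : 2 <= n%:R :> R by rewrite ler_nat.
  rewrite -mulr_natr; move: hw hn; set S := \sum_j _; set N := n%:R => hw hn.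
  lra.
have hlt : \sum_j (w (Y j))%:R < B%:R :> R.
  apply: lt_le_trans YB.
  rewrite (bigD1 j0) //= [X in _ < X](bigD1 j0) //=.
  apply: ltr_leD; first by case: (G (Ypos j0)) => _ _; apply.
  by apply: ler_sum => j _; case: (G (Ypos j)).
have hnat : ((\sum_j w (Y j))%N.+1 <= B)%N by rewrite -(ltr_nat R) natr_sum.
apply: (@le_trans _ _ (\sum_j (w (Y j))%:R)); first by apply: ler_sum.
by rewrite -natr_sum lerBrDr natr1 ler_nat.
Qed.
End Comb.

Section Rank.
Variable R : realFieldType.
Local Open Scope ring_scope.
Variable n : nat.
Variable x : 'I_n -> R.

Definition hcnt (v : R) : nat := (\sum_i ((x i <= v)%R : nat))%N.

Lemma hcnt_count v : hcnt v = count (fun u => u <= v) [seq x j | j <- enum 'I_n].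
Proof.
rewrite count_map -sum1_count big_enum_cond /hcnt [RHS]big_mkcond /=.
by apply: eq_bigr => i _; case: (x i <= v)%R.
Qed.

Lemma rank_sum (j0 : 'I_n) (hmin : forall j, x j0 <= x j) (F : nat -> R)
  (Fmono : forall a b, (a <= b)%N -> F a <= F b) :
  \sum_(1 <= i < n) F i.+1 <= \sum_(j | j != j0) F (hcnt (x j)).
Proof.
set sx := [seq x j | j <- enum 'I_n].
set s := sort <=%R sx.
have ps : perm_eq s sx by rewrite perm_sort.
have szs : size s = n by rewrite size_sort size_map size_enum_ord.
have srt : sorted <=%R s by apply: sort_sorted; exact: le_total.
have cnt : forall v, hcnt v = count (fun u => u <= v) s.
  by move=> v; rewrite hcnt_count; apply/esym/seq.permP.
have n0 : (0 < n)%N := leq_ltn_trans (leq0n _) (ltn_ord j0).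
have tot : \sum_j F (hcnt (x j)) = \sum_(0 <= i < n) F (hcnt (nth 0 s i)).
  transitivity (\sum_(v <- sx) F (hcnt v)); first by rewrite big_map big_enum.
  by rewrite -(perm_big _ ps) (big_nth 0) szs.
have s0 : nth 0 s 0 = x j0.
  apply/eqP; rewrite eq_le; apply/andP; split.
    have : x j0 \in s by rewrite (perm_mem ps); apply: map_f; rewrite mem_enum.
    move/(nthP 0) => [k hk <-].
    by apply: (sorted_leq_nth le_trans lexx) => //; rewrite inE szs.
  have : nth 0 s 0 \in sx by rewrite -(perm_mem ps) mem_nth // szs.
  by case/mapP => j _ ->.
have key : forall i, (i < n)%N -> (i.+1 <= hcnt (nth 0%R s i))%N.
  move=> i hi; rewrite cnt -[s in count _ s](cat_take_drop i.+1) count_cat.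
  apply: leq_trans (leq_addr _ _).
  have szt : size (take i.+1 s) = i.+1 by rewrite size_takel // szs.
  suff /eqP -> : count (fun u => u <= nth 0 s i) (take i.+1 s) == size (take i.+1 s).
    by rewrite szt.
  rewrite -all_count; apply/(all_nthP 0) => k hk.
  rewrite nth_take; last by rewrite -szt.
  apply: (sorted_leq_nth le_trans lexx) => //; rewrite ?inE ?szs //.
    by apply: leq_trans hk _; rewrite szt.
  by rewrite -ltnS -szt.
have : \sum_j F (hcnt (x j)) = F (hcnt (x j0)) + \sum_(j | j != j0) F (hcnt (x j)).
  by rewrite (bigD1 j0).
rewrite tot big_ltn // s0 => /addrI <-.
rewrite !big_nat; apply: ler_sum => i /andP [_ hi]; apply: Fmono; exact: key.
Qed.
End Rank.

Section Jensen.
Variable R : realFieldType.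
Local Open Scope ring_scope.
Variable n : nat.

Lemma cheb (z : 'I_n -> R) (m : nat) : (forall o, 0 <= z o) ->
  (\sum_i z i) * (\sum_i z i ^+ m) <= n%:R * \sum_i z i ^+ m.+1.
Proof.
move=> z0.
pose T i j := z i * z i ^+ m - z i * z j ^+ m.
have key : 0 <= \sum_i \sum_j (T i j + T j i).
  apply: sumr_ge0 => i _; apply: sumr_ge0 => j _.
  have -> : T i j + T j i = (z i - z j) * (z i ^+ m - z j ^+ m) by rewrite /T; ring.
  have [h|h] := lerP (z i) (z j).
    apply: mulr_le0; first by rewrite subr_le0.
    by rewrite subr_le0; apply: lerXn2r => //; rewrite nnegrE.
  apply: mulr_ge0; first by rewrite subr_ge0 ltW.
  by rewrite subr_ge0; apply: lerXn2r; rewrite ?nnegrE // ltW.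
have e1 : \sum_i \sum_j (T i j + T j i) = 2 * \sum_i \sum_j T i j.
  under eq_bigr do rewrite big_split /=.
  rewrite big_split /= [X in _ + X = _]exchange_big /=; ring.
have e2 : \sum_i \sum_j T i j = n%:R * \sum_i z i ^+ m.+1 - (\sum_i z i) * (\sum_i z i ^+ m).
  rewrite /T; under eq_bigr do rewrite sumrB sumr_const card_ord -mulr_sumr.
  rewrite sumrB mulr_suml; congr (_ - _).
  rewrite mulr_sumr; apply: eq_bigr => i _; by rewrite exprS mulr_natl.
move: key; rewrite e1 e2.
set A := n%:R * \sum_i z i ^+ m.+1.
set B := (\sum_i z i) * (\sum_i z i ^+ m); lra.
Qed.

Lemma jensen (z : 'I_n -> R) (m : nat) : (forall o, 0 <= z o) ->
  (\sum_i z i) ^+ m.+1 <= n%:R ^+ m * \sum_i z i ^+ m.+1.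
Proof.
move=> z0; elim: m => [|m IH].
  by rewrite expr0 mul1r expr1; under [X in _ <= X]eq_bigr do rewrite expr1.
have s0 : 0 <= \sum_i z i by apply: sumr_ge0.
rewrite exprS; apply: (le_trans (ler_wpM2l s0 IH)).
rewrite mulrCA exprS [n%:R * _]mulrC -mulrA.
apply: ler_wpM2l; first by rewrite exprn_ge0.
exact: cheb.
Qed.
End Jensen.

Local Open Scope ring_scope.

Lemma part1 (R : realFieldType) (m n : nat) (m0 : (0 < m)%N) (n2 : (2 <= n)%N)
  (a : 'I_n -> R) (q : {perm 'I_n} -> R) (ha : bid_seq a) (hq : perm_dist q)
  (d : 'I_m) (beta : R) (c : 'I_n -> R)
  (hbeta : beta = (\sum_(i < n) (i.+1 ^ m)%N)%:R)
  (hc : c = fun j => ((j.+1 ^ m)%N)%:R / beta) :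
  (m%:R)^-1 * (n%:R - (beta - 1) / ((n ^ m)%N)%:R) <= exp_wins a q c (@unif_perm R n) d.
Proof.
have n0 : (0 < n)%N by apply: leq_trans n2.
have b0 : 0 < beta.
  rewrite hbeta ltr0n (bigD1 (Ordinal n0)) //=.
  by rewrite exp1n.
rewrite (@decomp R n m a c (@unif_perm R n) q d m0 (unif_dist R n) hq).
apply: ler_wpM2l; first by rewrite invr_ge0 ler0n.
apply: lerB => //.
set C := (beta - 1) / _.
have HX : forall sA, \sum_o Esh a c (@unif_perm R n) sA o (None : option 'I_m) <= C.
  move=> sA.
  have cntL : forall y, \sum_j ind R (c j <= y) = (Lc n m (y * beta))%:R.
    move=> y; rewrite /Lc natr_sum; apply: eq_bigr => j _; by rewrite /ind hc ler_pdivrMr.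
  have cntS : forall y, \sum_j ind R (c j < y) = (Sc n m (y * beta))%:R.
    move=> y; rewrite /Sc natr_sum; apply: eq_bigr => j _; by rewrite /ind hc ltr_pdivrMr.
  have nz : n%:R ^+ m != 0 :> R by rewrite expf_eq0 pnatr_eq0 andbC; case: (n) n0.
  have E : forall o, Esh a c (@unif_perm R n) sA o (None : option 'I_m) <=
      V n m (a ((sA^-1)%g o) * beta) / ((n ^ m)%N)%:R.
    move=> o; apply: le_trans (Esh_None_le _ _ _ _ _ (unif_dist R n)) _.
    rewrite (unif_expect (fun j => ind R (c j <= a ((sA^-1)%g o)))) //.
    rewrite (unif_expect (fun j => ind R (c j < a ((sA^-1)%g o)))) //.
    rewrite cntL cntS /V !exprMn !natrX; rewrite !exprVn; set N := n%:R ^+ m; set A := _ ^+ m; set B := _ ^+ m; rewrite le_eqVlt; apply/orP; left; apply/eqP.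
    field; by rewrite nz.
  apply: (@le_trans _ _ (\sum_o V n m (a ((sA^-1)%g o) * beta) / ((n ^ m)%N)%:R)).
    by apply: ler_sum => o _; apply: E.
  rewrite -mulr_suml (reindex_inj (@perm_inj _ sA)) /=.
  under eq_bigr do rewrite permK.
  rewrite /C; apply: ler_wpM2r; first by rewrite invr_ge0 ler0n.
  have K := @K1 R n m m0 (fun j => a j * beta) (\sum_(i < n) (i.+1 ^ m)%N) n2.
  rewrite -hbeta in K; apply: K.
    by move=> j; rewrite mulr_gt0 //; case: ha => h _; apply: h.
  rewrite -mulr_suml; rewrite -[X in _ <= X]mul1r.
  by apply: ler_wpM2r; [apply: ltW | case: ha].
apply: (@le_trans _ _ (\sum_sA q sA * C)).
  apply: ler_sum => sA _; apply: ler_wpM2l; first by case: hq.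
  exact: HX.
by rewrite -mulr_suml; case: hq => _ ->; rewrite mul1r.
Qed.

Lemma part2 (R : realFieldType) (m' n : nat) (n2 : (2 <= n)%N)
  (x : 'I_n -> R) (p : {perm 'I_n} -> R) (hx : bid_seq x) (hp : perm_dist p)
  (beta : R) (hbeta : beta = (\sum_(i < n) (i.+1 ^ m'.+1)%N)%:R) :
  exists (a : 'I_n -> R) (q : {perm 'I_n} -> R),
    [/\ bid_seq a, perm_dist q &
        forall d : 'I_m'.+1, exp_wins a q x p d <=
          (m'.+1%:R)^-1 * (n%:R - (beta - 1) / ((n ^ m'.+1)%N)%:R)].
Proof.
have n0 : (0 < n)%N by apply: leq_trans n2.
case: hx => xpos xsum.
have [j0 _ hmin] := @arg_minP _ _ 'I_n (Ordinal n0) predT x isT.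
have {}hmin : forall j, x j0 <= x j by move=> j; apply: hmin.
have nR : 0 < n%:R :> R by rewrite ltr0n.
set eps := x j0 / n%:R.
have epos : 0 < eps by rewrite divr_gt0 // xpos.
pose a := fun j => if j == j0 then eps else x j + eps.
exists a, (@unif_perm R n); split.
- split.
    by move=> j; rewrite /a; case: ifP => _ //; rewrite addr_gt0 // xpos.
  have aj0 : a j0 = eps by rewrite /a eqxx.
  have E1 : \sum_(j | j != j0) a j = \sum_(j | j != j0) (x j + eps).
    apply: eq_bigr => j /negbTE; by rewrite /a => ->.
  have E2 : \sum_j (x j + eps) = (x j0 + eps) + \sum_(j | j != j0) (x j + eps).
    by rewrite (bigD1 j0).
  have E3 : \sum_j (x j + eps) = \sum_j x j + x j0.
    rewrite big_split /= sumr_const card_ord /eps -[_ *+ n]mulr_natr mulfVK //.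
    by rewrite gt_eqF.
  rewrite (bigD1 j0) //= aj0 E1.
  move: E2; rewrite E3 => E2.
  have -> : \sum_(j | j != j0) (x j + eps) = \sum_j x j - eps by rewrite -[LHS](addKr (x j0 + eps)) -E2; ring.
  by rewrite addrC subrK.
- exact: unif_dist.
move=> d.
rewrite (@decomp R n m'.+1 a x p (@unif_perm R n) d (ltn0Sn _) hp (unif_dist R n)).
apply: ler_wpM2l; first by rewrite invr_ge0 ler0n.
apply: lerB => //.
pose P o y := \sum_s p s * ind R (x ((s^-1)%g o) < y).
pose Nc y := \sum_i ind R (x i < y).
have ind_ge0 : forall b, 0 <= ind R b by move=> b; rewrite /ind ler0n.
have P_ge0 : forall o y, 0 <= P o y.
  move=> o y; apply: sumr_ge0 => s _; apply: mulr_ge0 => //; by case: hp.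
have sumP : forall y, \sum_o P o y = Nc y.
  move=> y; rewrite /P exchange_big /=.
  transitivity (\sum_s p s * Nc y).
    apply: eq_bigr => s _; rewrite -mulr_sumr; congr (_ * _).
    by rewrite /Nc [RHS](reindex_inj (@perm_inj _ (s^-1)%g)).
  by rewrite -mulr_suml; case: hp => _ ->; rewrite mul1r.
have L1 : \sum_sA (@unif_perm R n sA) * \sum_o (P o (a ((sA^-1)%g o))) ^+ m'.+1 <=
          \sum_sA (@unif_perm R n sA) * \sum_o Esh a x p sA o (None : option 'I_m'.+1).
  apply: ler_sum => sA _; apply: ler_wpM2l; first by case: (unif_dist R n).
  apply: ler_sum => o _; exact: (Esh_None_ge _ _ _ _ _ hp).
apply: le_trans L1.
have L2 : \sum_sA (@unif_perm R n sA) * \sum_o (P o (a ((sA^-1)%g o))) ^+ m'.+1 =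
          (n%:R)^-1 * \sum_j \sum_o (P o (a j)) ^+ m'.+1.
  under eq_bigr do rewrite mulr_sumr.
  rewrite exchange_big /=.
  under eq_bigr do rewrite (unif_expect (fun j => P _ (a j) ^+ m'.+1)) //.
  by rewrite -mulr_sumr exchange_big.
rewrite L2.
have L3 : forall j, (Nc (a j)) ^+ m'.+1 / n%:R ^+ m' <= \sum_o (P o (a j)) ^+ m'.+1.
  move=> j; rewrite -sumP ler_pdivrMr ?exprn_gt0 // mulrC.
  by apply: jensen => o; apply: P_ge0.
have L4 : beta - 1 <= \sum_j (Nc (a j)) ^+ m'.+1.
  have hb : beta - 1 = \sum_(1 <= i < n) (i.+1%:R) ^+ m'.+1.
    rewrite hbeta -(big_mkord xpredT (fun i => (i.+1 ^ m'.+1)%N)) (big_ltn n0) /=.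
    rewrite exp1n natrD (addrC 1%:R) addrK natr_sum; apply: eq_bigr => i _; by rewrite natrX.
  rewrite hb.
  have Fm : forall u v, (u <= v)%N -> u%:R ^+ m'.+1 <= v%:R ^+ m'.+1 :> R.
    by move=> u v h; apply: lerXn2r; rewrite ?nnegrE ?ler0n ?ler_nat.
  apply: le_trans (@rank_sum R n x j0 hmin (fun t => t%:R ^+ m'.+1) Fm) _.
  apply: (@le_trans _ _ (\sum_(j | j != j0) (Nc (a j)) ^+ m'.+1)).
    apply: ler_sum => j hj; apply: lerXn2r; rewrite ?nnegrE ?ler0n //.
      by apply: sumr_ge0 => i _; apply: ind_ge0.
    rewrite /hcnt natr_sum /Nc /a (negbTE hj); apply: ler_sum => i _.
    rewrite /ind ler_nat; case: (x i <= x j) /idP => //= h.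
    by rewrite (le_lt_trans h) // ltrDl.
  rewrite [X in _ <= X](bigD1 j0) //= lerDr exprn_ge0 //.
  by apply: sumr_ge0 => i _; apply: ind_ge0.
apply: (@le_trans _ _ ((n%:R)^-1 * \sum_j (Nc (a j)) ^+ m'.+1 / n%:R ^+ m')).
  rewrite natrX exprS -mulr_suml.
  set S := \sum_j _; set N := n%:R; set M := N ^+ m'.
  have Nz : N != 0 by rewrite gt_eqF.
  have Mz : M != 0 by rewrite /M expf_neq0.
  have -> : N^-1 * (S / M) = S / (N * M) by field; rewrite Nz Mz.
  apply: ler_wpM2r; last exact: L4.
  by apply/ltW; rewrite invr_gt0 mulr_gt0 // /M exprn_gt0.
apply: ler_wpM2l; first by rewrite invr_ge0 ler0n.
by apply: ler_sum => j _; apply: L3.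
Qed.


Theorem theorem4p5 (R : realType) (k n : nat) (hk : (2 <= k)%N) (hn : (k <= n)%N) :
  let beta : R := (\sum_(i < n) (i.+1 ^ k.-1)%N)%:R in
  let c : 'I_n -> R := fun j => ((j.+1 ^ k.-1)%N)%:R / beta in
  let bound : R := (k.-1%:R)^-1 * (n%:R - (beta - 1) / ((n ^ k.-1)%N)%:R) in
  (forall (a : 'I_n -> R) (q : {perm 'I_n} -> R),
     bid_seq a -> perm_dist q ->
     forall d : 'I_k.-1, bound <= exp_wins a q c (@unif_perm R n) d)
  /\
  (forall (x : 'I_n -> R) (p : {perm 'I_n} -> R),
     bid_seq x -> perm_dist p ->
     exists (a : 'I_n -> R) (q : {perm 'I_n} -> R),
       [/\ bid_seq a, perm_dist q &
           forall d : 'I_k.-1, exp_wins a q x p d <= bound]).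
Proof.
case: k hk hn => [|[|m']] // hk hn.
move=> beta c bound.
have n2 : (2 <= n)%N by apply: leq_trans hn.
split.
- move=> a q ha hq d.
  exact: (@part1 R m'.+1 n (ltn0Sn _) n2 a q ha hq d beta c erefl erefl).
- move=> x p hx hp.
  exact: (@part2 R m' n n2 x p hx hp beta erefl).
Qed.
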